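(* Let $D$ be a ZX-diagram and $c$ a cycle in $D$. Let $t_1,\dots,t_n$ be tokens on $D$ and $s$ a token state with $t_1\cdots t_n\leadsto^* s$. Then for every non-null term $t$ of $s$, $P(c,t_1\cdots t_n)=P(c,t)$.
   Context: ZX-diagrams. A (pure) ZX-diagram is built from generators by sequential composition $D_2\circ D_1$ (the output edges of $D_1$ are joined to the equally many input edges of $D_2$, the latter being relabeled by the former) and parallel composition $D_1\otimes D_2$. The generators are: the identity (a single wire), the swap (two crossing wires), the cup (two input edges $e_0,e_1$, no output), the cap (no input, two output edges $e_0,e_1$), the green spider $Z^n_m(\alpha)$ with $\alpha\in\mathbb R$, input edges $e_1,\dots,e_n$ and output edges $e'_1,\dots,e'_m$, and the Hadamard gate $H$ with input edge $e_0$ and output edge $e_1$. Diagrams are read top to bottom; distinct edges have distinct labels; identity and swap introduce no node. $\mathcal E(D)$ is the set of edges. Each edge has a top and a bottom end; top-to-bottom is the direction $\downarrow$, the reverse is $\uparrow$. Tokens. A token is a triple $(e\,d\,x)\in\mathcal E(D)\times\{\downarrow,\uparrow\}\times\{0,1\}$; token states are elements of the commutative polynomial algebra $\mathbf{tkS}(D)=\mathbb C[\mathbf{tk}(D)]$ whose indeterminates are the tokens; terms are monomials with nonzero coefficient. Rules ($x,y,b\in\{0,1\}$, $\neg x=1-x$): Collision: $(e\downarrow x)(e\uparrow y)\leadsto_c\delta_{x,y}$. Diffusion: cup: $(e_b\downarrow x)\leadsto_d(e_{\neg b}\uparrow x)$; cap: $(e_b\uparrow x)\leadsto_d(e_{\neg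 b}\downarrow x)$; green spider: $(e_k\downarrow x)\leadsto_d e^{i\alpha x}\prod_{i\neq k}(e_i\uparrow x)\prod_j(e'_j\downarrow x)$, $(e'_k\uparrow x)\leadsto_d e^{i\alpha x}\prod_{j\neq k}(e'_j\downarrow x)\prod_i(e_i\uparrow x)$; Hadamard: $(e_0\downarrow x)\leadsto_d\frac{(-1)^x}{\sqrt2}(e_1\downarrow x)+\frac1{\sqrt2}(e_1\downarrow\neg x)$, $(e_1\uparrow x)\leadsto_d\frac{(-1)^x}{\sqrt2}(e_0\uparrow x)+\frac1{\sqrt2}(e_0\uparrow\neg x)$. A step $\leadsto_d$ (resp. $\leadsto_c$) chooses a term and a token (resp. colliding pair) occurring as a factor, replaces it by the right-hand side and expands. A token state is collision-free if no $\leadsto_c$ step applies. $s\leadsto u$ iff $s\leadsto_d s'\leadsto_c^*u$ with $u$ collision-free; $\leadsto^*$ is the reflexive-transitive closure. Paths, cycles, polarity. View $D$ as a multigraph whose vertices are the occurrences of cups, caps, green spiders and Hadamard gates (plus an endpoint for each dangling edge end) and whose edges are those of $D$. A path $(e_0,\dots,e_n)$ is a sequence of pairwise distinct edges with a traversal going from $e_i$ to $e_{i+1}$ through a common vertex $g_i$, the $g_i$ pairwise distinct; the orientation of $e_i$ is $\downarrow$ if traversed from top end to bottom end and $\uparrow$ otherwise. A cycle is such a path whose traversal, after its last edge, returns through a vertex to its first edge. For a token $t=(e\,d\,x)$ and a path or cycle $c$: $P(c,t)=1$ if $e\in c$ with orientation $d$, $-1$ if $e\in c$ with the opposite orientation,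 $0$ otherwise; $P(c,\alpha t_1\cdots t_m)=\sum_iP(c,t_i)$, $P(c,\alpha)=0$ for constants. *)

(* Defs.v *)
From HB Require Import structures.
From mathcomp Require Import all_boot all_order all_algebra.
From mathcomp Require Import complex finmap multiset Rstruct.
From Stdlib Require Reals.
Notation R := Rdefinitions.R.

Set Implicit Arguments.
Unset Strict Implicit.
Unset Printing Implicit Defensive.

Import Order.TTheory GRing.Theory Num.Theory.

Local Open Scope ring_scope.

Definition Cplx : Type := R[i].

Definition expi (a : R) : Cplx := (Rtrigo_def.cos a +i* Rtrigo_def.sin a)%C.

Definition phase (a : R) (x : bool) : Cplx := if x then expi a else 1.

Definition invsqrt2 : Cplx := (((Num.sqrt (2 : R))^-1)%:C)%C.

(* GZ n m a is the green spider Z^n_m(a): n inputs, m outputs. *)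
Inductive generator :=
| GId | GSwap | GCup | GCap | GZ of nat & nat & R | GH.

(* DSeq D1 D2 is the sequential composition D2 \circ D1 (D1 on top),
   DPar D1 D2 is the parallel composition D1 \otimes D2. *)
Inductive diagram :=
| DGen of generator
| DSeq of diagram & diagram
| DPar of diagram & diagram.

(* Labelled form of a diagram: edges are labelled by natural numbers.        *)
(* Each node occurrence (cup, cap, green spider, Hadamard) records its input *)
(* edges (in order e_1..e_n / e_0,e_1 / e_0) and its output edges.           *)

Inductive node_kind := NCup | NCap | NZ of R | NH.

Record node := Node { nkind : node_kind; nins : seq nat; nouts : seq nat }.

(* fbound: all labels are < fbound; fedges: the edge set E(D);
   fins / fouts: the (ordered) dangling input / output edges. *)
Record fdiag := FDiag {
  fbound : nat; fedges : seq nat; fins : seq nat; fouts : seq nat;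
  fnodes : seq node }.

Definition relabel_node (f : nat -> nat) (nd : node) : node :=
  Node (nkind nd) (map f (nins nd)) (map f (nouts nd)).

Definition flat_gen (g : generator) : fdiag :=
  match g with
  | GId => FDiag 1 [:: 0%N] [:: 0%N] [:: 0%N] [::]
  | GSwap => FDiag 2 [:: 0%N; 1%N] [:: 0%N; 1%N] [:: 1%N; 0%N] [::]
  | GCup => FDiag 2 [:: 0%N; 1%N] [:: 0%N; 1%N] [::]
                  [:: Node NCup [:: 0%N; 1%N] [::]]
  | GCap => FDiag 2 [:: 0%N; 1%N] [::] [:: 0%N; 1%N]
                  [:: Node NCap [::] [:: 0%N; 1%N]]
  | GZ n m a => FDiag (n + m) (iota 0 (n + m)) (iota 0 n) (iota n m)
                  [:: Node (NZ a) (iota 0 n) (iota n m)]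
  | GH => FDiag 2 [:: 0%N; 1%N] [:: 0%N] [:: 1%N] [:: Node NH [:: 0%N] [:: 1%N]]
  end.

Definition par_fd (F1 F2 : fdiag) : fdiag :=
  let f := fun j => (fbound F1 + j)%N in
  FDiag (fbound F1 + fbound F2)
        (fedges F1 ++ map f (fedges F2))
        (fins F1 ++ map f (fins F2))
        (fouts F1 ++ map f (fouts F2))
        (fnodes F1 ++ map (relabel_node f) (fnodes F2)).

Definition seq_fd (F1 F2 : fdiag) : fdiag :=
  let f := fun j => if j \in fins F2 then nth 0%N (fouts F1) (index j (fins F2))
                    else (fbound F1 + j)%N in
  FDiag (fbound F1 + fbound F2)
        (fedges F1 ++ map f [seq j <- fedges F2 | j \notin fins F2])
        (fins F1)
        (map f (fouts F2))
        (fnodes F1 ++ map (relabel_node f) (fnodes F2)).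

Fixpoint flat (D : diagram) : fdiag :=
  match D with
  | DGen g => flat_gen g
  | DSeq D1 D2 => seq_fd (flat D1) (flat D2)
  | DPar D1 D2 => par_fd (flat D1) (flat D2)
  end.

Fixpoint wf (D : diagram) : bool :=
  match D with
  | DGen _ => true
  | DSeq D1 D2 => [&& wf D1, wf D2 & size (fouts (flat D1)) == size (fins (flat D2))]
  | DPar D1 D2 => wf D1 && wf D2
  end.

Notation down := true.
Notation up := false.

(* A token (e d x) : edge label, direction, bit. *)
Definition token : Type := (nat * bool * bool)%type.

Definition tok_edge (t : token) : nat := t.1.1.

(* Monomials in the commuting indeterminates "tokens". *)
Definition monomial : Type := {mset token}%mset.

Definition mono_of (ts : seq token) : monomial := seq_mset ts.

Definition mono1 (t : token) : monomial := msetn 1 t.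

(* A token state: an element of C[tokens], given by its coefficient function.
   Its terms are the monomials with nonzero coefficient. *)
Definition tstate : Type := monomial -> Cplx.

Definition state_of_mono (m : monomial) : tstate := fun u => (u == m)%:R.

Definition poly_list : Type := seq (Cplx * monomial).

Definition node_rule (nd : node) (t : token) (rhs : poly_list) : Prop :=
  let: (e, d, x) := t in
  let I := nins nd in
  let O := nouts nd in
  match nkind nd with
  | NCup => d = down /\ exists b : bool,
        e = nth 0%N I b /\ rhs = [:: (1, mono1 (nth 0%N I (~~ b), up, x))]
  | NCap => d = up /\ exists b : bool,
        e = nth 0%N O b /\ rhs = [:: (1, mono1 (nth 0%N O (~~ b), down, x))]
  | NZ a =>
      (d = down /\ exists2 k, (k < size I)%N & e = nth 0%N I k /\
         rhs = [:: (phase a x,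
                    mono_of ([seq (nth 0%N I i, up, x) | i <- iota 0 (size I) & i != k]
                             ++ [seq (o, down, x) | o <- O]))])
   \/ (d = up /\ exists2 k, (k < size O)%N & e = nth 0%N O k /\
         rhs = [:: (phase a x,
                    mono_of ([seq (nth 0%N O j, down, x) | j <- iota 0 (size O) & j != k]
                             ++ [seq (i, up, x) | i <- I]))])
  | NH =>
      (d = down /\ e = nth 0%N I 0 /\
         rhs = [:: ((-1) ^+ x * invsqrt2, mono1 (nth 0%N O 0, down, x));
                   (invsqrt2, mono1 (nth 0%N O 0, down, ~~ x))])
   \/ (d = up /\ e = nth 0%N O 0 /\
         rhs = [:: ((-1) ^+ x * invsqrt2, mono1 (nth 0%N I 0, up, x));
                   (invsqrt2, mono1 (nth 0%N I 0, up, ~~ x))])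
  end.

Definition diffusion_rule (F : fdiag) (t : token) (rhs : poly_list) : Prop :=
  exists2 nd, List.In nd (fnodes F) & node_rule nd t rhs.

(* s ~>_d s' : pick a term c*m of s and a token t dividing m, replace t by
   the right-hand side of its diffusion rule and expand. *)
Definition d_step (F : fdiag) (s s' : tstate) : Prop :=
  exists m t rhs,
    [/\ s m != 0, (0 < m t)%N, diffusion_rule F t rhs &
        forall u, s' u = s u - (u == m)%:R * s m
                         + s m * \sum_(p <- rhs) (u == msetD (msetB m (mono1 t)) p.2)%:R * p.1].

(* s ~>_c s' : pick a term c*m of s and a colliding pair (e d x)(e u y)
   dividing m, and replace it by delta_{x,y}. *)
Definition c_step (s s' : tstate) : Prop :=
  exists m e x y,
    [/\ s m != 0, (0 < m (e, down, x))%N, (0 < m (e, up, y))%N &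
        forall u, s' u = s u - (u == m)%:R * s m
          + (x == y)%:R * s m
            * (u == msetB (msetB m (mono1 (e, down, x))) (mono1 (e, up, y)))%:R].

Definition collision_free (s : tstate) : Prop :=
  forall m, s m != 0 -> forall e x y, ~ ((0 < m (e, down, x))%N /\ (0 < m (e, up, y))%N).

Inductive star (A : Type) (r : A -> A -> Prop) : A -> A -> Prop :=
| star_refl a : star r a a
| star_step a b c : r a b -> star r b c -> star r a c.

Definition big_step (F : fdiag) (s u : tstate) : Prop :=
  exists2 s', d_step F s s' & star c_step s' u /\ collision_free u.

(* Vertices: node occurrences (by index) and an endpoint for each dangling
   top (resp. bottom) end of an edge. *)
Inductive vertex := VNode of nat | VTop of nat | VBot of nat.

Definition top_vertex (F : fdiag) (e : nat) : vertex :=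
  let k := find (fun nd => e \in nouts nd) (fnodes F) in
  if (k < size (fnodes F))%N then VNode k else VTop e.

Definition bot_vertex (F : fdiag) (e : nat) : vertex :=
  let k := find (fun nd => e \in nins nd) (fnodes F) in
  if (k < size (fnodes F))%N then VNode k else VBot e.

(* A traversed edge: (edge, orientation), orientation true = down. *)
Definition tedge : Type := (nat * bool)%type.

Definition entry (F : fdiag) (a : tedge) : vertex :=
  if a.2 then top_vertex F a.1 else bot_vertex F a.1.
Definition exit (F : fdiag) (a : tedge) : vertex :=
  if a.2 then bot_vertex F a.1 else top_vertex F a.1.

Definition is_path (F : fdiag) (p : seq tedge) : Prop :=
  [/\ p != [::],
      all (fun a => a.1 \in fedges F) p,
      uniq (map fst p),
      (forall i, (i.+1 < size p)%N ->
          exit F (nth (0%N, down) p i) = entry F (nth (0%N, down) p i.+1)) &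
      (forall i j, (i < j)%N -> (j.+1 < size p)%N ->
          exit F (nth (0%N, down) p i) <> exit F (nth (0%N, down) p j))].

Definition is_cycle (F : fdiag) (p : seq tedge) : Prop :=
  is_path F p /\ exit F (last (0%N, down) p) = entry F (head (0%N, down) p).

Definition polarity_tok (c : seq tedge) (t : token) : int :=
  let: (e, d, _) := t in
  if (e, d) \in c then 1 else if (e, ~~ d) \in c then -1 else 0.

Definition polarity (c : seq tedge) (m : monomial) : int :=
  \sum_(t <- enum_mset m) polarity_tok c t.

(* Main.v *)
Require Import Defs.
From HB Require Import structures.
From mathcomp Require Import all_boot all_order all_algebra.
From mathcomp Require Import complex finmap multiset Rstruct.

Set Implicit Arguments.
Unset Strict Implicit.
Unset Printing Implicit Defensive.
Import Order.TTheory GRing.Theory Num.Theory.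
Local Open Scope ring_scope.
Lemma pol_perm c (m : monomial) (s : seq token) :
  perm_eq (enum_mset m) s -> polarity c m = \sum_(t <- s) polarity_tok c t.
Proof. by move=> h; rewrite /polarity (perm_big _ h). Qed.

Lemma polD c (A B : monomial) :
  polarity c (msetD A B) = polarity c A + polarity c B.
Proof.
rewrite (@pol_perm c _ (enum_mset A ++ enum_mset B)) ?big_cat //.
apply/allP => x _ /=; rewrite count_cat !count_mem_mset.
by rewrite (msetE2 A B x).
Qed.

Lemma pol1 c t : polarity c (mono1 t) = polarity_tok c t.
Proof. by rewrite /polarity /mono1 enum_msetn big_cons big_nil addr0. Qed.

Lemma polB c (m : monomial) t : (0 < m t)%N ->
  polarity c m = polarity_tok c t + polarity c (msetB m (mono1 t)).
Proof.
move=> h; rewrite -{1}(@msetB1K _ t m) ?polD ?pol1 //.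
by rewrite in_mset.
Qed.

Lemma pol_mono_of c s : polarity c (mono_of s) = \sum_(t <- s) polarity_tok c t.
Proof. by apply: pol_perm; apply: perm_eq_seq_mset. Qed.

Lemma sum_neq0 (T : eqType) (r : seq T) (F : T -> Cplx) :
  \sum_(p <- r) F p != 0 -> exists2 p, p \in r & F p != 0.
Proof.
elim: r => [|a r IH]; first by rewrite big_nil eqxx.
rewrite big_cons => h.
case: (boolP (F a == 0)) => [/eqP ha|ha]; last by exists a; rewrite ?mem_head.
move: h; rewrite ha add0r => /IH [p pr hp]; exists p => //.
by rewrite in_cons pr orbT.
Qed.

Definition pinv (c : seq tedge) (P0 : int) (s : tstate) :=
  forall m, s m != 0 -> polarity c m = P0.
Definition inv (c : seq tedge) (P0 : int) (s : tstate) :=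
  forall m, s m != 0 -> polarity c m = P0.

Lemma d_step_pinv F c P0 s s' :
  (forall t rhs, diffusion_rule F t rhs -> forall p, p \in rhs ->
      polarity c p.2 = polarity_tok c t) ->
  pinv c P0 s -> d_step F s s' -> pinv c P0 s'.
Proof.
move=> hr hs [m [t [rhs [hm ht hd hu]]]] u; rewrite hu.
case: (boolP (s u == 0)) => [/eqP su0|su _]; last exact: hs.
rewrite su0; case: (@eqP _ u m) => [-> _|um]; first exact: hs.
rewrite mul0r subr0 add0r => h.
have : \sum_(p <- rhs) (u == msetD (msetB m (mono1 t)) p.2)%:R * p.1 != 0.
  by apply: contraNneq h => ->; rewrite mulr0.
case/sum_neq0 => p prhs; case: (@eqP _ u (msetD (msetB m (mono1 t)) p.2)) => [->|]; last by rewrite mul0r eqxx.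
move=> _; rewrite polD (hr _ _ hd _ prhs) addrC -polB //; exact: hs.
Qed.

Lemma ptok_pair c e x y : uniq (map fst c) ->
  polarity_tok c (e, down, x) + polarity_tok c (e, up, y) = 0.
Proof.
move=> hu /=.
have hb : ~~ (((e, down) \in c) && ((e, up) \in c)).
  apply/negP => /andP [h1 h2].
  elim: c hu h1 h2 => // a c IH /= /andP [ha hu].
  rewrite !in_cons => /orP [/eqP h1|h1] /orP [/eqP h2|h2].
  - by rewrite -h1 in h2.
  - by move: ha; rewrite -h1 /=; move/negP; apply; apply/mapP; exists (e, up).
  - by move: ha; rewrite -h2 /=; move/negP; apply; apply/mapP; exists (e, down).
  - exact: IH.
by move: hb; case: ((e, down) \in c); case: ((e, up) \in c).
Qed.

Lemma c_step_pinv c P0 s s' : uniq (map fst c) ->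
  pinv c P0 s -> c_step s s' -> pinv c P0 s'.
Proof.
move=> huc hs [m [e [x [y [hm h1 h2 hu]]]]] u; rewrite hu.
case: (boolP (s u == 0)) => [/eqP su0|su _]; last exact: hs.
rewrite su0; case: (@eqP _ u m) => [-> _|um]; first exact: hs.
rewrite mul0r subr0 add0r.
case: (@eqP _ u (msetB (msetB m (mono1 (e, down, x))) (mono1 (e, up, y)))) => [-> _|]; last by rewrite mulr0 eqxx.
have e2 : (0 < (msetB m (mono1 (e, down, x))) (e, up, y))%N.
  by rewrite (msetE2 _ _ _) msetnE /= !xpair_eqE andbF subn0.
rewrite -(hs _ hm) (polB c h1) (polB c e2).
by rewrite addrA ptok_pair // add0r.
Qed.
Definition pd (c : seq tedge) (e : nat) (d : bool) : int := polarity_tok c (e, d, false).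

Lemma ptok_pd c e d x : polarity_tok c (e, d, x) = pd c e d.
Proof. by []. Qed.

Definition sig (a : tedge) (e : nat) (d : bool) : int :=
  if a.1 == e then (if a.2 == d then 1 else -1) else 0.

Lemma pd_sum c e d : uniq (map fst c) -> pd c e d = \sum_(a <- c) sig a e d.
Proof.
rewrite /pd /=.
elim: c => [|[e' d'] c IH] /=; first by rewrite big_nil.
case/andP => he hu; rewrite big_cons -IH // /sig /= !in_cons.
have nin : forall d0, (e, d0) \in c -> e' != e.
  move=> d0 h; apply: contraNneq he => ->; apply/mapP; by exists (e, d0).
case: (boolP (e' == e)) => [/eqP ee|ne].
  subst e'.
  have h1 : (e, d) \in c = false by apply/negP => /nin; rewrite eqxx.
  have h2 : (e, ~~ d) \in c = false by apply/negP => /nin; rewrite eqxx.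
  rewrite h1 h2 !xpair_eqE eqxx /= !orbF addr0.
  by clear; case: d; case: d'.
rewrite !xpair_eqE eq_sym (negbTE ne) /= add0r.
by [].
Qed.

Lemma sum_sig_uniq (s : seq nat) a d : uniq s ->
  \sum_(e <- s) sig a e d = if a.1 \in s then (if a.2 == d then 1 else -1) else 0.
Proof.
elim: s => [|x s IH] /=; first by rewrite big_nil.
case/andP => hx hu; rewrite big_cons IH // in_cons /sig.
case: (boolP (a.1 == x)) => [/eqP ->|_] /=; last by rewrite add0r.
by rewrite (negbTE hx) addr0.
Qed.

Lemma balance_sum c (I O : seq nat) : uniq (map fst c) -> uniq I -> uniq O ->
  \sum_(e <- I) pd c e up + \sum_(e <- O) pd c e down =
  \sum_(a <- c) (((if a.2 then a.1 \in O else a.1 \in I) : int)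
                 - ((if a.2 then a.1 \in I else a.1 \in O) : int)).
Proof.
move=> hc hI hO.
rewrite (eq_bigr (fun e => \sum_(a <- c) sig a e up)); last by move=> e _; rewrite pd_sum.
rewrite [X in _ + X](eq_bigr (fun e => \sum_(a <- c) sig a e down)); last by move=> e _; rewrite pd_sum.
rewrite exchange_big [X in _ + X]exchange_big /= -big_split /=.
apply: eq_bigr => a _; rewrite !sum_sig_uniq //.
by case: a => e []; case: (e \in I); case: (e \in O).
Qed.

Lemma iff_bool (b1 b2 : bool) (X : Prop) : (b1 <-> X) -> (b2 <-> X) -> b1 = b2.
Proof. case: b1; case: b2 => //; move=> [h1 h1'] [h2 h2']. by rewrite h2'; auto. by rewrite h1'; auto. Qed.

Lemma cycle_count F c (ent ext : pred tedge) (P : vertex -> Prop) :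
  is_cycle F c -> (forall a, ent a <-> P (entry F a)) ->
  (forall a, ext a <-> P (exit F a)) -> count ent c = count ext c.
Proof.
case => [[hne _ _ hstep _] hcl] hent hext.
case: c hne hstep hcl => // a0 c' _ hstep hcl.
have E : map ext (a0 :: c') = rot 1 (map ent (a0 :: c')).
  rewrite rot1_cons; apply: (@eq_from_nth _ false).
    by rewrite size_rcons !size_map.
  move=> i; rewrite size_map => hi; have {}hi : (i <= size c')%N by [].
  rewrite nth_rcons size_map [LHS](nth_map (0%N, down)) //.
  case: ltngtP hi => // [hlt _|-> _].
    rewrite (nth_map (0%N, down)) //.
    apply: (iff_bool (hext _)); rewrite (hstep i) /=; last by rewrite ltnS.
    exact: hent.
  apply: (iff_bool (hext _)).
  have -> : nth (0%N, down) (a0 :: c') (size c') = last (0%N, down) (a0 :: c').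
    by rewrite -nth_last.
  rewrite hcl; exact: hent.
rewrite -(count_map ent id) -(count_map ext id) E.
by apply/permP; rewrite perm_sym perm_rot.
Qed.

Definition dnode := Node NH [::] [::].
Definition ok_ins F := forall nd1 nd2 e, List.In nd1 (fnodes F) -> List.In nd2 (fnodes F) ->
  e \in nins nd1 -> e \in nins nd2 -> nd1 = nd2.
Definition ok_outs F := forall nd1 nd2 e, List.In nd1 (fnodes F) -> List.In nd2 (fnodes F) ->
  e \in nouts nd1 -> e \in nouts nd2 -> nd1 = nd2.
Definition isnd F nd v := exists j, v = VNode j /\ nth dnode (fnodes F) j = nd.

Lemma In_nth T (d : T) s j : (j < size s)%N -> List.In (nth d s j) s.
Proof.
elim: s j => [|x s IH] [|j] //= h; first by left.
by right; apply: IH.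
Qed.

Lemma In_has T (p : pred T) x s : List.In x s -> p x -> has p s.
Proof.
elim: s => [|y s IH] //= [-> ->|h hp] //.
by rewrite IH ?orbT.
Qed.

Lemma top_iff F nd e : ok_outs F -> List.In nd (fnodes F) ->
  (e \in nouts nd) <-> isnd F nd (top_vertex F e).
Proof.
move=> hu hin; rewrite /top_vertex; split.
  move=> he.
  have hh : has (fun x => e \in nouts x) (fnodes F) := In_has hin he.
  have hl := hh; rewrite has_find in hl; rewrite hl.
  exists (find (fun x => e \in nouts x) (fnodes F)); split => //.
  exact: (hu _ _ e (In_nth _ hl) hin (nth_find _ hh) he).
case: ifP => hlt [j [// [<-] hj]]; rewrite -hj.
by apply: (@nth_find _ _ (fun x => e \in nouts x)); rewrite has_find.
Qed.

Lemma bot_iff F nd e : ok_ins F -> List.In nd (fnodes F) ->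
  (e \in nins nd) <-> isnd F nd (bot_vertex F e).
Proof.
move=> hu hin; rewrite /bot_vertex; split.
  move=> he.
  have hh : has (fun x => e \in nins x) (fnodes F) := In_has hin he.
  have hl := hh; rewrite has_find in hl; rewrite hl.
  exists (find (fun x => e \in nins x) (fnodes F)); split => //.
  exact: (hu _ _ e (In_nth _ hl) hin (nth_find _ hh) he).
case: ifP => hlt [j [// [<-] hj]]; rewrite -hj.
by apply: (@nth_find _ _ (fun x => e \in nins x)); rewrite has_find.
Qed.

Lemma sum_count (T : Type) (b : pred T) s : \sum_(a <- s) ((b a) : int) = (count b s)%:Z.
Proof.
elim: s => [|x s IH] /=; first by rewrite big_nil.
by rewrite big_cons IH PoszD.
Qed.

Lemma balance F c nd : ok_ins F -> ok_outs F -> is_cycle F c ->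
  List.In nd (fnodes F) -> uniq (nins nd) -> uniq (nouts nd) ->
  \sum_(e <- nins nd) pd c e up + \sum_(e <- nouts nd) pd c e down = 0.
Proof.
move=> hi ho hc hin hI hO.
have huc : uniq (map fst c) by case: hc => [[]].
rewrite balance_sum // sumrB !sum_count.
rewrite (@cycle_count F c (fun a => if a.2 then a.1 \in nouts nd else a.1 \in nins nd)
  (fun a => if a.2 then a.1 \in nins nd else a.1 \in nouts nd) (isnd F nd) hc) ?subrr //.
  by case=> e [] /=; [apply: top_iff | apply: bot_iff].
by case=> e [] /=; [apply: bot_iff | apply: top_iff].
Qed.
Definition kind_ok (nd : node) : Prop :=
  match nkind nd with
  | NCup => size (nins nd) = 2%N /\ nouts nd = [::]
  | NCap => nins nd = [::] /\ size (nouts nd) = 2%N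
  | NZ _ => True
  | NH => size (nins nd) = 1%N /\ size (nouts nd) = 1%N
  end.

Lemma pd_neg c e d : uniq (map fst c) -> pd c e (~~ d) = - pd c e d.
Proof.
move=> hu; have := ptok_pair e false false hu; rewrite !ptok_pd.
by case: d => /= h; apply/eqP; rewrite -addr_eq0 ?h // addrC h.
Qed.

Lemma sum_split_k (f : nat -> int) (s : seq nat) k : (k < size s)%N ->
  \sum_(e <- s) f e = f (nth 0%N s k) + \sum_(i <- iota 0 (size s) | i != k) f (nth 0%N s i).
Proof.
move=> hk; rewrite (big_nth 0%N) /index_iota subn0 (bigD1_seq k) ?mem_iota ?iota_uniq //.
Qed.

Lemma pol_spider c (I O : seq nat) k d d' x :
  polarity c (mono_of ([seq (nth 0%N I i, d, x) | i <- iota 0 (size I) & i != k]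
                             ++ [seq (o, d', x) | o <- O])) =
  \sum_(i <- iota 0 (size I) | i != k) pd c (nth 0%N I i) d + \sum_(o <- O) pd c o d'.
Proof. by rewrite pol_mono_of big_cat !big_map big_filter. Qed.

Lemma rule_pol F c nd t rhs : ok_ins F -> ok_outs F -> is_cycle F c ->
  List.In nd (fnodes F) -> uniq (nins nd) -> uniq (nouts nd) -> kind_ok nd ->
  node_rule nd t rhs -> forall p, p \in rhs -> polarity c p.2 = polarity_tok c t.
Proof.
move=> hi ho hc hin hI hO hk.
have huc : uniq (map fst c) by case: hc => [[]].
have Nd : forall e, pd c e down = - pd c e up := fun e => @pd_neg c e up huc.
have Nu : forall e, pd c e up = - pd c e down := fun e => @pd_neg c e down huc.
have B := balance hi ho hc hin hI hO.
move: B hk; case: t => [[e d] x]; rewrite ptok_pd /node_rule.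
case: nd hin hI hO => k I O /= _ hI hO; case: k => [||a|] /=.
- move=> B; rewrite /kind_ok /=; case=> hs hO0; rewrite hO0 in B.
  move=> [-> [b [-> ->]]] p; rewrite inE => /eqP -> /=.
  rewrite pol1 ptok_pd.
  case: I hs B hI => [|i0 [|i1 [|? ?]]] //= _.
  rewrite big_nil !big_cons big_nil !addr0 => /eqP; rewrite addr_eq0 => /eqP B _.
  by case: b => /=; rewrite ?Nd ?B ?opprK.
- move=> B; rewrite /kind_ok /=; case=> hI0 hs; rewrite hI0 in B.
  move=> [-> [b [-> ->]]] p; rewrite inE => /eqP -> /=.
  rewrite pol1 ptok_pd.
  case: O hs B hO => [|i0 [|i1 [|? ?]]] //= _.
  rewrite big_nil !big_cons big_nil !add0r addr0 => /eqP; rewrite addr_eq0 => /eqP B _.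
  by case: b => /=; rewrite ?Nu ?B ?opprK.
- move=> B _; move=> [[-> [kk hkk [-> ->]]]|[-> [kk hkk [-> ->]]]] p;
    rewrite inE => /eqP -> /=.
  + rewrite pol_spider Nd; move: B; rewrite (sum_split_k (fun e => pd c e up) hkk) -addrA => /eqP.
    by rewrite addr_eq0 => /eqP ->; rewrite opprK.
  + rewrite pol_spider Nu; move: B; rewrite (sum_split_k (fun e => pd c e down) hkk) addrCA => /eqP.
    by rewrite addr_eq0 => /eqP ->; rewrite opprK addrC.
- move=> B; rewrite /kind_ok /=; case=> hs1 hs2.
  case: I hs1 B hI => [|i0 [|? ?]] //= _; case: O hs2 hO => [|o0 [|? ?]] //= _.
  rewrite !big_cons !big_nil !addr0 => _ /eqP; rewrite addr_eq0 => /eqP B _.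
  case=> [[-> [-> ->]]|[-> [-> ->]]] p; rewrite !inE => /orP [] /eqP -> /=;
    rewrite pol1 ptok_pd.
  + by rewrite [RHS]Nd B opprK.
  + by rewrite [RHS]Nd B opprK.
  + by rewrite B Nu.
  + by rewrite B Nu.
Qed.
Local Close Scope ring_scope.
Definition node_ok (bnd : nat) (nd : node) :=
  [/\ uniq (nins nd), uniq (nouts nd), all (fun e => e < bnd) (nins nd),
      all (fun e => e < bnd) (nouts nd) & kind_ok nd].

Definition okI (L : seq node) := forall nd1 nd2 e, List.In nd1 L -> List.In nd2 L ->
  e \in nins nd1 -> e \in nins nd2 -> nd1 = nd2.
Definition okO (L : seq node) := forall nd1 nd2 e, List.In nd1 L -> List.In nd2 L ->
  e \in nouts nd1 -> e \in nouts nd2 -> nd1 = nd2.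

Lemma In_L nd L1 L2 f : List.In nd (L1 ++ map (relabel_node f) L2) ->
  List.In nd L1 \/ exists2 nd', List.In nd' L2 & nd = relabel_node f nd'.
Proof.
case/List.in_app_iff => [h|]; first by left.
elim: L2 => [|y L2 IH] /=; first by [].
case=> [<-|h]; first by right; exists y; [left|].
case: (IH h) => [h'|[nd' h1 h2]]; first by left.
by right; exists nd'; [right|].
Qed.

Lemma kind_ok_relabel f nd : kind_ok nd -> kind_ok (relabel_node f nd).
Proof.
case: nd => [[||a|] I O]; rewrite /kind_ok /= ?size_map //.
- by case=> -> ->.
- by case=> -> ->.
Qed.

Lemma all_lt_weak (s : seq nat) a b : a <= b -> all (fun e => e < a) s -> all (fun e => e < b) s.
Proof. move=> hab /allP h; apply/allP => x /h hx; exact: leq_trans hx hab. Qed.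

Lemma all_lt_mem (s : seq nat) a e : all (fun e => e < a) s -> e \in s -> e < a.
Proof. by move/allP => h /h. Qed.

Section Comb.
Variables (F1 F2 : fdiag) (f : nat -> nat) (b : nat).
Hypothesis n1 : forall nd, List.In nd (fnodes F1) -> node_ok (fbound F1) nd.
Hypothesis n2 : forall nd, List.In nd (fnodes F2) -> node_ok (fbound F2) nd.
Hypothesis i1 : okI (fnodes F1).
Hypothesis i2 : okI (fnodes F2).
Hypothesis o1 : okO (fnodes F1).
Hypothesis o2 : okO (fnodes F2).
Hypothesis d1 : forall nd e, List.In nd (fnodes F1) -> e \in fouts F1 -> e \notin nins nd.
Hypothesis d2 : forall nd e, List.In nd (fnodes F2) -> e \in fins F2 -> e \notin nouts nd.
Hypothesis finj : injective f.
Hypothesis hf : forall j, (j \in fins F2 /\ f j \in fouts F1) \/ fbound F1 <= f j.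
Hypothesis hb : forall j, j < fbound F2 -> f j < b.
Hypothesis hb1 : fbound F1 <= b.

Let L := fnodes F1 ++ map (relabel_node f) (fnodes F2).

Lemma comb_node_ok nd : List.In nd L -> node_ok b nd.
Proof.
case/In_L => [h|[nd' h ->]].
  case: (n1 h) => ? ? ? ? ?; split => //; exact: all_lt_weak hb1 _.
case: (n2 h) => ? ? hI hO ?; split => /=; rewrite ?map_inj_uniq //.
- by apply/allP => x /mapP [y /(all_lt_mem hI) hy ->]; apply: hb.
- by apply/allP => x /mapP [y /(all_lt_mem hO) hy ->]; apply: hb.
- exact: kind_ok_relabel.
Qed.

Lemma crossI nd1 nd2 e : List.In nd1 (fnodes F1) -> List.In nd2 (fnodes F2) ->
  e \in nins nd1 -> e \in map f (nins nd2) -> False.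
Proof.
move=> h1 h2 he /mapP [j hj ej].
case: (n1 h1) => _ _ hI _ _.
case: (hf j) => [[_ hj1]|hj1].
  by move: (d1 h1 hj1); rewrite -ej he.
by move: (all_lt_mem hI he); rewrite ej ltnNge hj1.
Qed.

Lemma crossO nd1 nd2 e : List.In nd1 (fnodes F1) -> List.In nd2 (fnodes F2) ->
  e \in nouts nd1 -> e \in map f (nouts nd2) -> False.
Proof.
move=> h1 h2 he /mapP [j hj ej].
case: (n1 h1) => _ _ _ hO _.
case: (hf j) => [[hj1 _]|hj1].
  by move: (d2 h2 hj1); rewrite hj.
by move: (all_lt_mem hO he); rewrite ej ltnNge hj1.
Qed.

Lemma comb_okI : okI L.
Proof.
move=> nd1 nd2 e /In_L [h1|[n1' h1 ->]] /In_L [h2|[n2' h2 ->]] /= he1 he2.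
- exact: i1 h1 h2 he1 he2.
- by case: (crossI h1 h2 he1 he2).
- by case: (crossI h2 h1 he2 he1).
- case/mapP: he1 => j hj ej; rewrite ej (mem_map finj) in he2.
  by rewrite (i2 h1 h2 hj he2).
Qed.

Lemma comb_okO : okO L.
Proof.
move=> nd1 nd2 e /In_L [h1|[n1' h1 ->]] /In_L [h2|[n2' h2 ->]] /= he1 he2.
- exact: o1 h1 h2 he1 he2.
- by case: (crossO h1 h2 he1 he2).
- by case: (crossO h2 h1 he2 he1).
- case/mapP: he1 => j hj ej; rewrite ej (mem_map finj) in he2.
  by rewrite (o2 h1 h2 hj he2).
Qed.

End Comb.

Record good (F : fdiag) : Prop := Good {
  g_uins : uniq (fins F);
  g_uouts : uniq (fouts F);
  g_bins : all (fun e => e < fbound F) (fins F);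
  g_bouts : all (fun e => e < fbound F) (fouts F);
  g_nodes : forall nd, List.In nd (fnodes F) -> node_ok (fbound F) nd;
  g_ins : okI (fnodes F);
  g_outs : okO (fnodes F);
  g_d1 : forall nd e, List.In nd (fnodes F) -> e \in fouts F -> e \notin nins nd;
  g_d2 : forall nd e, List.In nd (fnodes F) -> e \in fins F -> e \notin nouts nd }.

Lemma In1 (x y : node) : List.In x [:: y] -> x = y.
Proof. by case=> [<-|]. Qed.

Lemma good_gen g : good (flat_gen g).
Proof.
case: g => [||||n m a|]; constructor => //=;
  try (by move=> nd1 nd2 e /In1 -> /In1 ->);
  try (by move=> nd /In1 -> /=; split);
  try (by move=> nd e /In1 -> /=; rewrite ?inE => /eqP ->).
- by move=> nd e /In1 ->.
- by move=> nd e /In1 ->.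
- by rewrite iota_uniq.
- by rewrite iota_uniq.
- by apply/allP => x; rewrite mem_iota => /andP [_ h]; apply: leq_trans h (leq_addr _ _).
- by apply/allP => x; rewrite mem_iota => /andP [_ ->].
- move=> nd /In1 -> /=; split; rewrite ?iota_uniq //.
  + by apply/allP => x; rewrite mem_iota => /andP [_ h]; apply: leq_trans h (leq_addr _ _).
  + by apply/allP => x; rewrite mem_iota => /andP [_ ->].
- by move=> nd e /In1 -> /=; rewrite !mem_iota add0n => /andP [h _]; rewrite ltnNge h.
- by move=> nd e /In1 -> /=; rewrite !mem_iota add0n => /andP [_ h]; rewrite leqNgt h.
Qed.

Lemma nins_lt F nd e : good F -> List.In nd (fnodes F) -> e \in nins nd -> e < fbound F.
Proof. by move=> G h; case: (g_nodes G h) => _ _ hI _ _; apply: all_lt_mem. Qed.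
Lemma nouts_lt F nd e : good F -> List.In nd (fnodes F) -> e \in nouts nd -> e < fbound F.
Proof. by move=> G h; case: (g_nodes G h) => _ _ _ hO _; apply: all_lt_mem. Qed.

Lemma good_par F1 F2 : good F1 -> good F2 -> good (par_fd F1 F2).
Proof.
move=> G1 G2.
have finj : injective (addn (fbound F1)) := @addnI (fbound F1).
have hf : forall j, (j \in fins F2 /\ fbound F1 + j \in fouts F1) \/ fbound F1 <= fbound F1 + j.
  by move=> j; right; apply: leq_addr.
have hb : forall j, j < fbound F2 -> fbound F1 + j < fbound F1 + fbound F2.
  by move=> j; rewrite ltn_add2l.
have hb1 : fbound F1 <= fbound F1 + fbound F2 := leq_addr _ _.
have nhas : forall s1 s2, all (fun e => e < fbound F1) s1 ->
    ~~ has (mem s1) (map (addn (fbound F1)) s2).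
  move=> s1 s2 h; apply/hasPn => x /mapP [j _ ->]; apply/negP => hx.
  by have := all_lt_mem h hx; rewrite ltnNge leq_addr.
have ball : forall s, all (fun e => e < fbound F2) s ->
    all (fun e => e < fbound F1 + fbound F2) (map (addn (fbound F1)) s).
  by move=> s /allP h; apply/allP => x /mapP [j /h hj ->]; apply: hb.
constructor => /=.
- by rewrite cat_uniq (g_uins G1) nhas ?(g_bins G1) // map_inj_uniq ?(g_uins G2).
- by rewrite cat_uniq (g_uouts G1) nhas ?(g_bouts G1) // map_inj_uniq ?(g_uouts G2).
- by rewrite all_cat ball ?(g_bins G2) // (all_lt_weak hb1 (g_bins G1)).
- by rewrite all_cat ball ?(g_bouts G2) // (all_lt_weak hb1 (g_bouts G1)).
- move=> nd; apply: (comb_node_ok (g_nodes G1) (g_nodes G2) finj hb hb1).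
- exact: (comb_okI (g_nodes G1) (g_ins G1) (g_ins G2) (g_d1 G1) finj hf).
- exact: (comb_okO (g_nodes G1) (g_outs G1) (g_outs G2) (g_d2 G2) finj hf).
- move=> nd e /In_L [h|[nd' h ->]]; rewrite mem_cat => /orP [he|/mapP [o ho ->]] /=.
  + exact: (g_d1 G1).
  + apply/negP => /(nins_lt G1 h); rewrite ltnNge leq_addr //.
  + apply/negP => /mapP [j _ ej]; move: (all_lt_mem (g_bouts G1) he).
    by rewrite ej ltnNge leq_addr.
  + by rewrite (mem_map finj) (g_d1 G2).
- move=> nd e /In_L [h|[nd' h ->]]; rewrite mem_cat => /orP [he|/mapP [o ho ->]] /=.
  + exact: (g_d2 G1).
  + apply/negP => /(nouts_lt G1 h); rewrite ltnNge leq_addr //.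
  + apply/negP => /mapP [j _ ej]; move: (all_lt_mem (g_bins G1) he).
    by rewrite ej ltnNge leq_addr.
  + by rewrite (mem_map finj) (g_d2 G2).
Qed.

Definition sf F1 F2 j :=
  if j \in fins F2 then nth 0 (fouts F1) (index j (fins F2)) else fbound F1 + j.

Lemma good_seq F1 F2 : good F1 -> good F2 -> size (fouts F1) = size (fins F2) ->
  good (seq_fd F1 F2).
Proof.
move=> G1 G2 hsz.
have nthlt : forall j, j \in fins F2 -> nth 0 (fouts F1) (index j (fins F2)) \in fouts F1.
  by move=> j hj; apply: mem_nth; rewrite hsz index_mem.
have finj : injective (sf F1 F2).
  move=> j1 j2; rewrite /sf; case: ifP => h1; case: ifP => h2.
  - move/eqP; rewrite nth_uniq ?hsz ?index_mem ?(g_uouts G1) // => /eqP E.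
    by rewrite -(nth_index 0 h1) -(nth_index 0 h2) E.
  - move=> E; move: (all_lt_mem (g_bouts G1) (nthlt _ h1)).
    by rewrite E ltnNge leq_addr.
  - move=> E; move: (all_lt_mem (g_bouts G1) (nthlt _ h2)).
    by rewrite -E ltnNge leq_addr.
  - exact: addnI.
have hf : forall j, (j \in fins F2 /\ sf F1 F2 j \in fouts F1) \/ fbound F1 <= sf F1 F2 j.
  move=> j; rewrite /sf; case: ifP => h; first by left; split => //; apply: nthlt.
  by right; apply: leq_addr.
have hb1 : fbound F1 <= fbound F1 + fbound F2 := leq_addr _ _.
have hb : forall j, j < fbound F2 -> sf F1 F2 j < fbound F1 + fbound F2.
  move=> j hj; rewrite /sf; case: ifP => h; last by rewrite ltn_add2l.
  exact: leq_trans (all_lt_mem (g_bouts G1) (nthlt _ h)) hb1.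
have ball : forall s, all (fun e => e < fbound F2) s ->
    all (fun e => e < fbound F1 + fbound F2) (map (sf F1 F2) s).
  by move=> s /allP h; apply/allP => x /mapP [j /h hj ->]; apply: hb.
have -> : seq_fd F1 F2 = FDiag (fbound F1 + fbound F2)
        (fedges (seq_fd F1 F2)) (fins F1) (map (sf F1 F2) (fouts F2))
        (fnodes F1 ++ map (relabel_node (sf F1 F2)) (fnodes F2)) by [].
constructor => /=.
- exact: (g_uins G1).
- by rewrite map_inj_uniq ?(g_uouts G2).
- exact: (all_lt_weak hb1 (g_bins G1)).
- by rewrite ball ?(g_bouts G2).
- move=> nd; apply: (comb_node_ok (g_nodes G1) (g_nodes G2) finj hb hb1).
- exact: (comb_okI (g_nodes G1) (g_ins G1) (g_ins G2) (g_d1 G1) finj hf).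
- exact: (comb_okO (g_nodes G1) (g_outs G1) (g_outs G2) (g_d2 G2) finj hf).
- move=> nd e /In_L [h|[nd' h ->]] /mapP [o ho ->] /=.
  + case: (hf o) => [[_ h']|h']; first exact: (g_d1 G1).
    by apply/negP => /(nins_lt G1 h); rewrite ltnNge h'.
  + by rewrite (mem_map finj) (g_d1 G2).
- move=> nd e /In_L [h|[nd' h ->]] he /=.
  + exact: (g_d2 G1).
  + apply/negP => /mapP [j hj ej].
    case: (hf j) => [[h' _]|h'].
      by move: (g_d2 G2 h h'); rewrite hj.
    by move: (all_lt_mem (g_bins G1) he); rewrite ej ltnNge h'.
Qed.

Lemma good_flat D : wf D -> good (flat D).
Proof.
elim: D => [g|D1 IH1 D2 IH2|D1 IH1 D2 IH2] /=.
- by move=> _; apply: good_gen.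
- case/and3P => h1 h2 /eqP hs; exact: good_seq (IH1 h1) (IH2 h2) hs.
- case/andP => h1 h2; exact: good_par (IH1 h1) (IH2 h2).
Qed.
Local Open Scope ring_scope.
Lemma star_pinv F c P0 s1 s2 : good F -> is_cycle F c ->
  star (big_step F) s1 s2 -> pinv c P0 s1 -> pinv c P0 s2.
Proof.
move=> G hc; have huc : uniq (map fst c) by case: hc => [[]].
elim=> // a b d [s' hd [hcs _]] _ IH ha; apply: IH.
have hr : forall t rhs, diffusion_rule F t rhs -> forall p, p \in rhs ->
    polarity c p.2 = polarity_tok c t.
  move=> t rhs [nd hin hrule].
  case: (g_nodes G hin) => hI hO _ _ hk.
  exact: (rule_pol (g_ins G) (g_outs G) hc hin hI hO hk hrule).
have h1 := d_step_pinv hr ha hd.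
elim: hcs h1 => // x y z hxy _ IH2 hx; apply: IH2.
exact: (c_step_pinv huc hx hxy).
Qed.
Unset Implicit Arguments.
Theorem mainTheorem3 (D : diagram) (c : seq tedge) (ts : seq token) (s : tstate) :
  wf D ->
  is_cycle (flat D) c ->
  (forall t, t \in ts -> tok_edge t \in fedges (flat D)) ->
  star (big_step (flat D)) (state_of_mono (mono_of ts)) s ->
  forall m : monomial, s m != 0 -> polarity c (mono_of ts) = polarity c m.
Proof.
move=> hwf hc _ hst m hm.
have hi : pinv c (polarity c (mono_of ts)) (state_of_mono (mono_of ts)).
  move=> u; rewrite /state_of_mono; case: (@eqP _ u (mono_of ts)) => [-> //|].
  by rewrite eqxx.
by rewrite (star_pinv (good_flat hwf) hc hst hi hm).
Qed.
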